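(* Let $\Gamma$ be a locally finite connected graph, let $B\subseteq\Gamma$ be finite, and let $A\in\mathcal{A}(B)$. Then the shadow $\partial A=\{\overline f\in\partial_h\Gamma:\overline f\text{ agrees with }\overline d_A\text{ on }B\}$ is nonempty if and only if $A$ is infinite.
   Context: $\Gamma$ is identified with its vertex set with path metric $d$, and $d_x(y)=d(x,y)$. $\overline F(\Gamma,\mathbb{Z})$ is the quotient of $\mathbb{Z}^\Gamma$ (product topology) by the constant functions. The horofunction boundary $\partial_h\Gamma$ is the set of limit points of $\{\overline{d_x}:x\in\Gamma\}$ in $\overline F(\Gamma,\mathbb{Z})$. Two classes agree on $B$ if representatives differ by a constant on $B$. For finite $B$ and $x\in\Gamma$, the atom of $x$ is $\{y: d_y-d_x\text{ is constant on }B\}$. $\mathcal{A}(B)$ is the set of atoms, and $\overline d_A$ is the common restriction to $B$, modulo constants, of $d_x$ for $x\in A$. *)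

(* Defs.v *)
From Stdlib Require Import ZArith List ClassicalEpsilon.
Open Scope Z_scope.

Section Graph.
Context {V : Type} (adj : V -> V -> Prop).

Inductive walk : nat -> V -> V -> Prop :=
| walk_nil x : walk 0 x x
| walk_cons n x y z : adj x y -> walk n y z -> walk (S n) x z.

Definition locally_finite : Prop :=
  forall x, exists l : list V, forall y, adj x y -> In y l.

Definition connected : Prop := forall x y, exists n, walk n x y.

Definition is_dist (x y : V) (n : nat) : Prop :=
  walk n x y /\ forall m, walk m x y -> (n <= m)%nat.

(* the path metric d (well defined when the graph is connected) *)
Definition dist (x y : V) : nat :=
  epsilon (inhabits 0%nat) (fun n => is_dist x y n).

Definition dfun (x : V) : V -> Z := fun y => Z.of_nat (dist x y).

(* classes of f and g in F(Gamma,Z) = Z^Gamma / constants agree on B *)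
Definition agree_on (B : list V) (f g : V -> Z) : Prop :=
  exists c, forall b, In b B -> f b - g b = c.

Definition same_class (f g : V -> Z) : Prop :=
  exists c, forall y, f y - g y = c.

(* the class of f is a limit (accumulation) point of {class of d_x : x in Gamma}
   in the quotient of the product topology; basic neighbourhoods of the class of f
   are the classes agreeing with it on a finite set B. *)
Definition in_horo_boundary (f : V -> Z) : Prop :=
  forall B : list V, exists x, agree_on B (dfun x) f /\ ~ same_class (dfun x) f.

Definition atom (B : list V) (x : V) : V -> Prop :=
  fun y => agree_on B (dfun y) (dfun x).

Definition is_atom (B : list V) (A : V -> Prop) : Prop :=
  exists x, forall y, A y <-> atom B x y.

Definition in_shadow (B : list V) (A : V -> Prop) (f : V -> Z) : Prop :=
  in_horo_boundary f /\ forall a, A a -> agree_on B f (dfun a).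

End Graph.

Definition finite_set {V : Type} (A : V -> Prop) : Prop :=
  exists l : list V, forall y, A y -> In y l.

(* Main.v *)
Require Import Defs.
From Stdlib Require Import ZArith List Lia Classical ClassicalEpsilon.
Open Scope Z_scope.

Lemma walk_snoc {V} (adj : V -> V -> Prop) n x y z :
  walk adj n x y -> adj y z -> walk adj (S n) x z.
Proof.
  induction 1; intros.
  - econstructor; eauto. constructor.
  - econstructor; eauto.
Qed.

Lemma walk_unsnoc {V} (adj : V -> V -> Prop) n x z :
  walk adj (S n) x z -> exists y, walk adj n x y /\ adj y z.
Proof.
  revert x. induction n; intros x H; inversion H as [|n0 x0 y0 z0 Hxy Hw]; subst.
  - inversion Hw; subst. exists x. split; [constructor|auto].
  - destruct (IHn _ Hw) as [w [Hw1 Hw2]]. exists w. split; auto. econstructor; eauto.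
Qed.

Lemma walk_app {V} (adj : V -> V -> Prop) a b x y z :
  walk adj a x y -> walk adj b y z -> walk adj (a + b) x z.
Proof.
  induction 1; intros; simpl; auto. econstructor; eauto.
Qed.

Lemma walk_rev {V} (adj : V -> V -> Prop) (Hsym : forall x y, adj x y -> adj y x) n x y :
  walk adj n x y -> walk adj n y x.
Proof.
  induction 1. constructor. eapply walk_snoc; eauto.
Qed.

Lemma nat_min (P : nat -> Prop) : (exists n, P n) -> exists n, P n /\ forall m, P m -> (n <= m)%nat.
Proof.
  intros [n Hn]. revert Hn. pattern n. apply (well_founded_induction lt_wf). clear n.
  intros n IH Hn. destruct (classic (exists m, P m /\ (m < n)%nat)) as [[m [Pm Hm]]|Hno].
  - apply (IH m Hm Pm).
  - exists n. split; auto. intros m Pm. destruct (Nat.lt_ge_cases m n); auto.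
    exfalso; apply Hno; eauto.
Qed.

Lemma dist_spec {V} (adj : V -> V -> Prop) (Hconn : connected adj) x y :
  walk adj (dist adj x y) x y /\ forall m, walk adj m x y -> (dist adj x y <= m)%nat.
Proof.
  unfold dist. apply (epsilon_spec (inhabits 0%nat) (fun n => is_dist adj x y n)).
  apply nat_min. apply Hconn.
Qed.

Lemma dist_le {V} (adj : V -> V -> Prop) (Hconn : connected adj) x y m :
  walk adj m x y -> (dist adj x y <= m)%nat.
Proof. apply dist_spec; auto. Qed.

Lemma dist_sym {V} (adj : V -> V -> Prop) (Hsym : forall x y, adj x y -> adj y x)
  (Hconn : connected adj) x y : dist adj x y = dist adj y x.
Proof.
  apply Nat.le_antisymm; apply dist_le; auto; apply walk_rev; auto; apply dist_spec; auto.
Qed.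

Lemma dist_tri {V} (adj : V -> V -> Prop) (Hconn : connected adj) x y z :
  (dist adj x z <= dist adj x y + dist adj y z)%nat.
Proof.
  apply dist_le; auto. eapply walk_app; apply dist_spec; auto.
Qed.

Lemma dist_refl {V} (adj : V -> V -> Prop) (Hconn : connected adj) x : dist adj x x = 0%nat.
Proof. pose proof (dist_le adj Hconn x x 0 (walk_nil _ x)). lia. Qed.

Lemma agree_sym {V} (B : list V) f g : agree_on B f g -> agree_on B g f.
Proof. intros [c Hc]. exists (-c). intros b Hb. specialize (Hc b Hb). lia. Qed.

Lemma agree_trans {V} (B : list V) f g h : agree_on B f g -> agree_on B g h -> agree_on B f h.
Proof. intros [c Hc] [d Hd]. exists (c+d). intros b Hb. specialize (Hc b Hb). specialize (Hd b Hb). lia. Qed.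

Lemma agree_sub {V} (B B' : list V) f g : (forall y, In y B -> In y B') -> agree_on B' f g -> agree_on B f g.
Proof. intros H [c Hc]. exists c. auto. Qed.

Lemma pigeon (P : Z -> nat -> Prop)
  (Hant : forall c m m', (m <= m')%nat -> P c m' -> P c m) :
  forall k lo, (forall m, exists c, lo <= c <= lo + Z.of_nat k /\ P c m) -> exists c, forall m, P c m.
Proof.
  induction k; intros lo H.
  - exists lo. intros m. destruct (H m) as [c [Hc Pc]]. replace lo with c by lia. auto.
  - destruct (classic (forall m, P (lo + Z.of_nat (S k)) m)) as [Hall|Hno]; [eauto|].
    apply not_all_ex_not in Hno. destruct Hno as [m0 Hm0].
    apply (IHk lo). intros m. destruct (H (Nat.max m m0)) as [c [Hc Pc]].
    exists c. destruct (Z.eq_dec c (lo + Z.of_nat (S k))) as [->|Hne].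
    + exfalso. apply Hm0. eapply Hant; [|exact Pc]. lia.
    + split; [lia|]. eapply Hant; [|exact Pc]. lia.
Qed.

Lemma chain {V} (L : nat -> list V) (Q : list V -> (V -> Z) -> Prop)
  (idx : V -> nat) (Hidx : forall y, In y (L (idx y)))
  (Hmono : forall a b y, (a <= b)%nat -> In y (L a) -> In y (L b))
  (H0 : exists f0, Q (L 0%nat) f0)
  (HS : forall n f, Q (L n) f -> exists f', Q (L (S n)) f' /\ forall y, In y (L n) -> f' y = f y) :
  exists f : V -> Z, forall n, exists g, Q (L n) g /\ forall y, In y (L n) -> f y = g y.
Proof.
  destruct (constructive_indefinite_description _ H0) as [f0 Hf0].
  pose (step := fun n (s : {f | Q (L n) f}) =>
     constructive_indefinite_description _ (HS n (proj1_sig s) (proj2_sig s))).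
  pose (F := nat_rect (fun n => {f | Q (L n) f}) (exist _ f0 Hf0)
     (fun n s => exist _ (proj1_sig (step n s)) (proj1 (proj2_sig (step n s))))).
  assert (HF : forall n y, In y (L n) -> proj1_sig (F (S n)) y = proj1_sig (F n) y).
  { intros n y Hy. simpl. apply (proj2 (proj2_sig (step n (F n)))). auto. }
  assert (HF2 : forall a d y, In y (L a) -> proj1_sig (F (d + a)%nat) y = proj1_sig (F a) y).
  { intros a d y Hy. induction d; auto. simpl plus. rewrite HF; auto.
    apply (Hmono a); auto. lia. }
  exists (fun y => proj1_sig (F (idx y)) y).
  intros n. exists (proj1_sig (F n)). split; [apply proj2_sig|].
  intros y Hy. destruct (Nat.le_ge_cases (idx y) n).
  - replace n with ((n - idx y) + idx y)%nat by lia. rewrite HF2; auto.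
  - replace (idx y) with ((idx y - n) + n)%nat by lia. rewrite HF2; auto.
Qed.

Lemma forward {V} (adj : V -> V -> Prop) (B : list V) (A : V -> Prop) (HA : is_atom adj B A) f :
  in_shadow adj B A f -> ~ finite_set A.
Proof.
  intros [Hb Hsh] [lA HlA].
  destruct HA as [x0 Hx0].
  assert (Ax0 : A x0). { apply Hx0. exists 0. intros; lia. }
  assert (HL : forall l : list V, exists L, forall a, In a l -> ~ same_class (dfun adj a) f ->
              ~ agree_on L (dfun adj a) f).
  { induction l as [|a l IH].
    - exists nil. intros a [].
    - destruct IH as [L HL].
      destruct (classic (same_class (dfun adj a) f)) as [Hs|Hns].
      + exists L. intros a' [<-|Ha']; auto.
      + assert (exists y1, dfun adj a y1 - f y1 <> dfun adj a a - f a) as [y1 Hy1].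
        { apply NNPP; intro Hn. apply Hns. exists (dfun adj a a - f a). intro y.
          apply NNPP; intro; apply Hn; eauto. }
        exists (a :: y1 :: L). intros a' [<-|Ha'] Hns'.
        * intros [c Hc]. apply Hy1. rewrite (Hc a), (Hc y1); simpl; auto.
        * intro Hag. apply (HL a' Ha' Hns'). eapply agree_sub; [|exact Hag]. simpl; auto. }
  destruct (HL lA) as [L HLp].
  destruct (Hb (B ++ L)) as [x [Hag Hns]].
  assert (Ax : A x).
  { apply Hx0. unfold atom. eapply agree_trans.
    - eapply agree_sub; [|exact Hag]. intros; apply in_or_app; auto.
    - apply Hsh; auto. }
  apply (HLp x (HlA x Ax) Hns). eapply agree_sub; [|exact Hag]. intros; apply in_or_app; auto.
Qed.

Lemma iso {V} (adj : V -> V -> Prop) (Hsym : forall x y, adj x y -> adj y x)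
  (Hconn : connected adj) (nbz : list V) z x
  (Hnb : forall y, adj z y -> In y nbz) :
  agree_on (z :: nbz) (dfun adj x) (dfun adj z) -> x = z.
Proof.
  intros [c Hc]. apply NNPP. intro Hne.
  destruct (dist_spec adj Hconn x z) as [Hw _].
  destruct (dist adj x z) as [|k] eqn:Ek.
  - inversion Hw; subst; auto.
  - destruct (walk_unsnoc adj _ _ _ Hw) as [y [Hwy Hyz]].
    pose proof (dist_le adj Hconn _ _ _ Hwy) as Hdy.
    pose proof (Hc z (or_introl eq_refl)) as H1.
    pose proof (Hc y (or_intror (Hnb y (Hsym _ _ Hyz)))) as H2.
    unfold dfun in H1, H2. rewrite Ek, dist_refl in H1 by auto. lia.
Qed.

Fixpoint ball {V} (nb : V -> list V) (o : V) (n : nat) : list V :=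
  match n with 0%nat => o :: nil | S n => ball nb o n ++ flat_map nb (ball nb o n) end.

Lemma ball_mono {V} nb (o : V) a b y : (a <= b)%nat -> In y (ball nb o a) -> In y (ball nb o b).
Proof.
  intros H. induction H; auto. intros Hy. simpl. apply in_or_app; auto.
Qed.

Lemma ball_walk {V} (adj : V -> V -> Prop) nb (Hnb : forall x y, adj x y -> In y (nb x)) o :
  forall k y, walk adj k o y -> In y (ball nb o k).
Proof.
  induction k; intros y Hw.
  - inversion Hw; subst. simpl; auto.
  - destruct (walk_unsnoc adj _ _ _ Hw) as [w [Hw1 Hw2]]. simpl. apply in_or_app; right.
    apply in_flat_map. exists w. split; auto.
Qed.

Lemma ball_list {V} (P : V -> Prop) nb (o : V) (idx : V -> nat)
  (Hidx : forall y, In y (ball nb o (idx y))) :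
  forall S : list V, exists N, forall y, In y S -> In y (ball nb o N).
Proof.
  induction S as [|a S [N HN]].
  - exists 0%nat. intros y [].
  - exists (Nat.max N (idx a)). intros y [<-|Hy].
    + eapply ball_mono; [|apply Hidx]. lia.
    + eapply ball_mono; [|apply HN; auto]. lia.
Qed.

Lemma backward (V : Type) (adj : V -> V -> Prop)
  (Hsym : forall x y, adj x y -> adj y x)
  (Hlf : locally_finite adj) (Hconn : connected adj)
  (B : list V) (A : V -> Prop) (HA : is_atom adj B A) :
  ~ finite_set A -> exists f : V -> Z, in_shadow adj B A f.
Proof.
  intros Hinf.
  destruct HA as [o Ho].
  assert (Ao : A o). { apply Ho. exists 0. intros; lia. }
  pose (nb := fun x => proj1_sig (constructive_indefinite_description _ (Hlf x))).
  assert (Hnb : forall x y, adj x y -> In y (nb x)).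
  { intros x y H. unfold nb. destruct (constructive_indefinite_description _ (Hlf x)); simpl; auto. }
  pose (idx := fun y => dist adj o y).
  assert (Hidx : forall y, In y (ball nb o (idx y))).
  { intros y. apply (ball_walk adj nb Hnb). apply dist_spec; auto. }
  assert (far : forall m, exists x, A x /\ (m <= dist adj o x)%nat).
  { intros m. apply NNPP. intro Hn. apply Hinf. exists (ball nb o m).
    intros y Ay. eapply ball_mono; [|apply Hidx]. unfold idx.
    destruct (Nat.le_gt_cases m (dist adj o y)); [exfalso; eauto|lia]. }
  pose (Q := fun (S : list V) (f : V -> Z) => forall m : nat, exists x, A x /\ (m <= dist adj o x)%nat /\
              forall y, In y S -> dfun adj x y - dfun adj x o = f y).
  assert (Hbound : forall x v, - Z.of_nat (dist adj o v) <= dfun adj x v - dfun adj x o <= Z.of_nat (dist adj o v)).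
  { intros x v. unfold dfun.
    pose proof (dist_tri adj Hconn x o v). pose proof (dist_tri adj Hconn x v o).
    rewrite (dist_sym adj Hsym Hconn v o) in *. lia. }
  assert (ext : forall S f, Q S f -> forall v, exists f', Q (v :: S) f' /\ forall y, In y S -> f' y = f y).
  { intros S f HQ v. destruct (classic (In v S)) as [HvS|HvS].
    - exists f. split; auto. intros m. destruct (HQ m) as [x [Ax [Hm Hx]]].
      exists x. split; auto. split; auto. intros y [<-|Hy]; auto.
    - destruct (pigeon (fun c m => exists x, A x /\ (m <= dist adj o x)%nat /\
              (forall y, In y S -> dfun adj x y - dfun adj x o = f y) /\ dfun adj x v - dfun adj x o = c))
        with (k := (2 * dist adj o v)%nat) (lo := - Z.of_nat (dist adj o v)) as [c Hc].
      + intros c m m' Hle [x [Ax [Hm [Hx Hxv]]]]. exists x. repeat split; auto. lia.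
      + intros m. destruct (HQ m) as [x [Ax [Hm Hx]]]. exists (dfun adj x v - dfun adj x o).
        split; [pose proof (Hbound x v); lia|]. exists x. auto.
      + exists (fun y => if excluded_middle_informative (y = v) then c else f y). split.
        * intros m. destruct (Hc m) as [x [Ax [Hm [Hx Hxv]]]]. exists x. split; auto. split; auto.
          intros y Hy. destruct (excluded_middle_informative (y = v)) as [->|Hne]; auto.
          destruct Hy as [<-|Hy]; [congruence|auto].
        * intros y Hy. destruct (excluded_middle_informative (y = v)) as [->|Hne]; tauto. }
  assert (extl : forall l S f, Q S f -> exists f', Q (l ++ S) f' /\ forall y, In y S -> f' y = f y).
  { induction l as [|a l IH]; intros S f HQ.
    - exists f. auto.
    - destruct (IH S f HQ) as [f1 [H1 H1']]. destruct (ext _ _ H1 a) as [f2 [H2 H2']].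
      exists f2. split; auto. intros y Hy. rewrite H2'; auto. apply in_or_app; auto. }
  assert (Qsub : forall S S' f, (forall y, In y S -> In y S') -> Q S' f -> Q S f).
  { intros S S' f Hs HQ m. destruct (HQ m) as [x [Ax [Hm Hx]]]. exists x. auto. }
  destruct (chain (ball nb o) Q idx Hidx (ball_mono nb o)) as [f Hf].
  - exists (fun _ => 0). intros m. destruct (far m) as [x [Ax Hm]]. exists x. split; [exact Ax|]. split; [exact Hm|].
    intros y [<-|[]]. lia.
  - intros n g Hg. destruct (extl (ball nb o (S n)) _ _ Hg) as [f' [H1 H2]].
    exists f'. split; auto. eapply Qsub; [|exact H1]. intros; apply in_or_app; auto.
  - assert (P : forall S m, exists x, A x /\ (m <= dist adj o x)%nat /\
                  forall y, In y S -> dfun adj x y - dfun adj x o = f y).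
    { intros S m. destruct (ball_list A nb o idx Hidx S) as [N HN].
      destruct (Hf N) as [g [Hg Hfg]]. destruct (Hg m) as [x [Ax [Hm Hx]]].
      exists x. repeat split; auto. intros y Hy. rewrite Hfg; auto. }
    assert (Hncl : forall z, ~ same_class (dfun adj z) f).
    { intros z [c Hc]. destruct (P (z :: nb z) (S (dist adj o z))) as [x [Ax [Hm Hx]]].
      assert (x = z).
      { apply (iso adj Hsym Hconn (nb z) z x (Hnb z)). exists (dfun adj x o - c).
        intros b Hb. specialize (Hx b Hb). specialize (Hc b). lia. }
      subst. lia. }
    exists f. split.
    + intros B'. destruct (P B' 0%nat) as [x [Ax [_ Hx]]]. exists x. split; auto.
      exists (dfun adj x o). intros b Hb. specialize (Hx b Hb). lia.
    + intros a Aa. destruct (P B 0%nat) as [x [Ax [_ Hx]]].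
      apply agree_trans with (dfun adj x).
      * exists (- dfun adj x o). intros b Hb. specialize (Hx b Hb). lia.
      * eapply agree_trans; [apply Ho; exact Ax|]. apply agree_sym. apply Ho; exact Aa.
Qed.

Theorem mainTheorem15 (V : Type) (adj : V -> V -> Prop)
  (Hsym : forall x y, adj x y -> adj y x)
  (Hlf : locally_finite adj) (Hconn : connected adj)
  (B : list V) (A : V -> Prop) (HA : is_atom adj B A) :
  (exists f : V -> Z, in_shadow adj B A f) <-> ~ finite_set A.
Proof.
  split.
  - intros [f Hf]. exact (forward adj B A HA f Hf).
  - apply backward; auto.
Qed.
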